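(* Let $Q=(q_1,\ldots,q_k)$ be an instance of the FIFO stack-up problem, let $n$ be the total number of bins in $Q$, and let $(Q,Q_0),(Q,Q_1),\ldots,(Q,Q_n)$ with $Q_0=Q$ and $Q_n=(\emptyset,\ldots,\emptyset)$ be a processing of $Q$ with $p$ stack-up places (i.e. $|\mathit{open}(Q,Q_i)|\le p$ for all $0\le i\le n$). Then the sequence $\mathcal{X}=(\mathit{open}(Q,Q_0),\ldots,\mathit{open}(Q,Q_n))$ is a directed path-decomposition of the sequence graph $G_Q$ of width at most $p-1$.
   Context: A bin $b$ carries a pallet symbol $\mathit{plt}(b)$ (a positive integer); bin $b$ is destined for pallet $\mathit{plt}(b)$. An instance is a list $Q=(q_1,\ldots,q_k)$ of finite sequences of bins, all bins (across all sequences) pairwise distinct; it is assumed that for every pallet symbol occurring, the sequences together contain at least two bins destined for it. $\mathit{plts}(Q)$ is the set of pallet symbols of all bins in $Q$. A subsequence of $q=(b_1,\ldots,b_n)$ is a suffix $q'=(b_j,\ldots,b_n)$, $j\ge 1$ (possibly empty), and $q-q'=(b_1,\ldots,b_{j-1})$. A configuration is a pair $(Q,Q')$ with $Q'=(q'_1,\ldots,q'_k)$, each $q'_j$ a subsequence of $q_j$. A pallet $t$ is open in $(Q,Q')$ if some bin destined for $t$ lies in some $q'_i$ and some bin destined for $t$ lies in some $q_j-q'_j$; $\mathit{open}(Q,Q')$ denotes the set of open pallets. A transformation step removes the first bin of one nonempty $q'_i$. A processing of $Q$ is a sequence of configurations $(Q,Q_0),\ldots,(Q,Q_n)$ with $Q_0=Q$,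 $Q_n$ consisting of $k$ empty sequences, each obtained from the previous by one transformation step; it uses $p$ stack-up places if every configuration has at most $p$ open pallets. The sequence graph $G_Q=(V,E)$ has $V=\mathit{plts}(Q)$ and an arc $(u,v)$ iff $u\ne v$ and some sequence $q_i$ contains a bin destined for $u$ at a position strictly before a bin destined for $v$. A directed path-decomposition of a digraph $G=(V,E)$ is a sequence $(X_1,\ldots,X_r)$ of subsets of $V$ with: (1) $X_1\cup\cdots\cup X_r=V$; (2) for every arc $(u,v)\in E$ there are $i\le j$ with $u\in X_i$, $v\in X_j$; (3) if $u\in X_i$ and $u\in X_j$ with $i\le j$ then $u\in X_l$ for all $i\le l\le j$. Its width is $\max_i |X_i|-1$. *)

(* Defs.v *)
From mathcomp Require Import all_boot all_order all_algebra.
Set Implicit Arguments. Unset Strict Implicit. Unset Printing Implicit Defensive.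

Section FIFO.
Variables (B : eqType) (plt : B -> nat).

Definition is_instance (Q : seq (seq B)) : Prop :=
  [/\ uniq (flatten Q),
      forall b, b \in flatten Q -> 0 < plt b &
      forall b, b \in flatten Q ->
        2 <= count (fun b' => plt b' == plt b) (flatten Q)].

Definition plts (Q : seq (seq B)) : seq nat := undup (map plt (flatten Q)).

(* q - q' for a subsequence (suffix) q' of q. *)
Definition seq_minus (q q' : seq B) : seq B := take (size q - size q') q.

Definition is_open (Q Q' : seq (seq B)) (t : nat) : bool :=
  has (fun i => has (fun b => plt b == t) (nth [::] Q' i)) (iota 0 (size Q)) &&
  has (fun j => has (fun b => plt b == t) (seq_minus (nth [::] Q j) (nth [::] Q' j)))
      (iota 0 (size Q)).

Definition open_plts (Q Q' : seq (seq B)) : seq nat :=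
  [seq t <- plts Q | is_open Q Q' t].

Definition trans_step (Q1 Q2 : seq (seq B)) : Prop :=
  exists i b s, nth [::] Q1 i = b :: s /\ Q2 = set_nth [::] Q1 i s.

Definition processing (Q : seq (seq B)) (Ps : seq (seq (seq B))) : Prop :=
  [/\ 0 < size Ps,
      nth [::] Ps 0 = Q,
      nth [::] Ps (size Ps).-1 = nseq (size Q) [::] &
      forall i, i.+1 < size Ps -> trans_step (nth [::] Ps i) (nth [::] Ps i.+1)].

Definition seq_arc (Q : seq (seq B)) (u v : nat) : Prop :=
  u != v /\ exists2 q, q \in Q &
    exists b1 b2 s1 s2 s3, q = s1 ++ b1 :: s2 ++ b2 :: s3 /\ plt b1 = u /\ plt b2 = v.

End FIFO.


(* Directed path-decomposition of a digraph with vertex set V and arc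
   relation E; bags are finite sets of vertices given as lists. *)
Definition dir_path_decomp (V : seq nat) (E : nat -> nat -> Prop)
    (Xs : seq (seq nat)) : Prop :=
  [/\ (forall v, v \in V <-> exists2 X, X \in Xs & v \in X),
      (forall u v, E u v -> exists i j,
          [/\ i <= j, j < size Xs, u \in nth [::] Xs i & v \in nth [::] Xs j]) &
      (forall u i j l, i <= l -> l <= j -> j < size Xs ->
          u \in nth [::] Xs i -> u \in nth [::] Xs j -> u \in nth [::] Xs l)].

(* width = max_i |X_i| - 1 (as an integer; sets counted without repetition) *)
Definition pd_width (Xs : seq (seq nat)) : int :=
  ((\max_(X <- Xs) size (undup X))%:Z - 1)%R.

(* Main.v *)
Require Import Defs.
From mathcomp Require Import all_boot all_order all_algebra.
From mathcomp Require Import zify.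
Import GRing.Theory Num.Theory.

Lemma seq_minus_drop (B : eqType) (q : seq B) c : seq_minus q (drop c q) = take c q.
Proof.
rewrite /seq_minus size_drop; case: (leqP c (size q)) => h.
  by rewrite subKn.
have -> : size q - (size q - c) = size q by lia.
by rewrite take_size take_oversize // ltnW.
Qed.

Lemma trans_first (P : nat -> bool) n : ~~ P 0 -> P n -> exists2 i, i < n & ~~ P i && P i.+1.
Proof.
elim: n => [|n IH] h0 hn; first by rewrite hn in h0.
case hP: (P n); first by have [i hi hh] := IH h0 hP; exists i => //; apply: ltnW.
by exists n => //; rewrite hP hn.
Qed.

Lemma has_sumn (B : Type) (a : pred B) (F : nat -> seq B) (L : seq nat) :
  has (fun m => has a (F m)) L = (0 < sumn [seq count a (F m) | m <- L]).
Proof. by elim: L => //= x L ->; rewrite has_count addn_gt0. Qed.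

Lemma sumn_add (F G : nat -> nat) (L : seq nat) :
  sumn [seq F m | m <- L] + sumn [seq G m | m <- L] = sumn [seq F m + G m | m <- L].
Proof. elim: L => //= x L <-; lia. Qed.

Lemma sumn_step (F G : nat -> nat) j (L : seq nat) : uniq L ->
  (forall m, m != j -> F m = G m) -> F j <= G j + 1 ->
  sumn [seq F m | m <- L] <= sumn [seq G m | m <- L] + 1.
Proof.
move=> uL hne hj; elim: L uL => //= x L IH /andP [xL uL].
case: (eqVneq x j) => [exj|nxj].
  subst x.
  have -> : [seq F m | m <- L] = [seq G m | m <- L].
    apply/eq_in_map => m mL; apply: hne; apply/eqP => e; subst m; by rewrite mL in xL.
  lia.
rewrite hne //; have := IH uL; lia.
Qed.

Lemma mem_drop_pos (B : eqType) (s1 s2 s3 : seq B) b1 b2 k :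
  k <= size s1 + size s2 + 1 -> b2 \in drop k (s1 ++ b1 :: s2 ++ b2 :: s3).
Proof.
move=> hk; rewrite (_ : s1 ++ b1 :: s2 ++ b2 :: s3 = (s1 ++ b1 :: s2) ++ b2 :: s3); last first.
  by rewrite -catA.
rewrite drop_cat size_cat /=; case: ifP => h.
  by rewrite mem_cat in_cons eqxx !orbT.
have -> : k - (size s1 + (size s2).+1) = 0 by lia.
by rewrite drop0 mem_head.
Qed.

Lemma mem_take_pos (B : eqType) (s1 t : seq B) b1 c :
  size s1 < c -> b1 \in take c (s1 ++ b1 :: t).
Proof.
move=> hc; rewrite take_cat ltnNge (ltnW hc) /=.
have -> : c - size s1 = (c - size s1 - 1).+1 by lia.
by rewrite /= mem_cat in_cons eqxx orbT.
Qed.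

Theorem theorem1 (B : eqType) (plt : B -> nat) (Q : seq (seq B))
    (Ps : seq (seq (seq B))) (p : nat) :
  is_instance plt Q ->
  processing Q Ps ->
  size Ps = (size (flatten Q)).+1 ->
  (forall i, i < size Ps -> size (open_plts plt Q (nth [::] Ps i)) <= p) ->
  dir_path_decomp (plts plt Q) (seq_arc plt Q)
      [seq open_plts plt Q Qi | Qi <- Ps] /\
  (pd_width [seq open_plts plt Q Qi | Qi <- Ps] <= p%:Z - 1)%R.
Proof.
move=> [Huniq _ Hcnt] [Hsz0 H0 Hlast Hstep] Hsize Hp.
pose P i := nth [::] Ps i.
pose n := size Q.
pose remb t i := has (fun m => has (fun b => plt b == t) (nth [::] (P i) m)) (iota 0 n).
pose doneb t i := has (fun m => has (fun b => plt b == t)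
        (seq_minus (nth [::] Q m) (nth [::] (P i) m))) (iota 0 n).
have Hopen : forall t i, is_open plt Q (P i) t = remb t i && doneb t i by [].
have Hst : forall i, i.+1 < size Ps -> exists j b s,
    [/\ nth [::] (P i) j = b :: s, j < size (P i) & P i.+1 = set_nth [::] (P i) j s].
  move=> i hi; have [j [b [s [hj e]]]] := Hstep i hi.
  exists j, b, s; split => //.
  rewrite ltnNge; apply/negP => /(nth_default [::]) hd.
  by rewrite /P hd in hj.
have Hinv : forall i, i < size Ps -> size (P i) = n /\
    forall m, exists c, nth [::] (P i) m = drop c (nth [::] Q m).
  elim=> [_|i IH hi].
    by rewrite /P H0; split=> // m; exists 0; rewrite drop0.
  have [j [b [s [hj jlt ->]]]] := Hst i hi.
  have [hsz hc] := IH (ltnW hi).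
  split; first by rewrite size_set_nth -hsz; lia.
  move=> m; rewrite nth_set_nth /=; case: eqP => [->|_]; last exact: hc.
  have [c hc'] := hc j; exists (1 + c).
  have e : drop 1 (nth [::] (P i) j) = s by rewrite hj drop1.
  by rewrite -e hc' drop_drop.
have Hst2 : forall i m, i.+1 < size Ps ->
    nth [::] (P i.+1) m = nth [::] (P i) m \/ nth [::] (P i.+1) m = drop 1 (nth [::] (P i) m).
  move=> i m hi; have [j [b [s [hj jlt ->]]]] := Hst i hi.
  rewrite nth_set_nth /=; case: eqP => [->|_]; last by left.
  by right; rewrite hj drop1.
have Hmono : forall i l, i <= l -> l < size Ps ->
    forall m, exists k, nth [::] (P l) m = drop k (nth [::] (P i) m).
  move=> i; elim=> [|l IH] hil hl m.
    by move: hil; rewrite leqn0 => /eqP ->; exists 0; rewrite drop0.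
  move: hil; rewrite leq_eqVlt => /orP [/eqP <-|hil]; first by exists 0; rewrite drop0.
  have [k hk] := IH hil (ltnW hl) m.
  case: (Hst2 l m hl) => ->; first by exists k.
  by exists (1 + k); rewrite hk drop_drop.
pose a t := fun b : B => plt b == t.
pose cR t i := sumn [seq count (a t) (nth [::] (P i) m) | m <- iota 0 n].
pose cD t i := sumn [seq count (a t) (seq_minus (nth [::] Q m) (nth [::] (P i) m)) | m <- iota 0 n].
pose tot t := count (a t) (flatten Q).
have HremE : forall t i, remb t i = (0 < cR t i) by move=> t i; exact: has_sumn.
have HdoneE : forall t i, doneb t i = (0 < cD t i) by move=> t i; exact: has_sumn.
have HcRstep : forall t i, i.+1 < size Ps -> cR t i <= cR t i.+1 + 1.
  move=> t i hi; have [j [b [s [hj jlt e]]]] := Hst i hi.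
  apply: (@sumn_step _ _ j); first exact: iota_uniq.
    by move=> m /negbTE mj; rewrite e nth_set_nth /= mj.
  rewrite hj e nth_set_nth /= eqxx /=; rewrite addnC leq_add2l; exact: leq_b1.
have Hsum : forall t i, i < size Ps -> cR t i + cD t i = tot t.
  move=> t i hi; have [_ hc] := Hinv i hi.
  rewrite /cR /cD sumn_add /tot count_flatten -[in RHS](mkseq_nth [::] Q) /mkseq -map_comp.
  congr sumn; apply/eq_in_map => m _ /=.
  have [c ->] := hc m; by rewrite seq_minus_drop addnC -count_cat cat_take_drop.
have HA : forall t i, 1 < tot t -> i.+1 < size Ps -> ~~ doneb t i -> remb t i.+1.
  move=> t i ht hi; rewrite HremE HdoneE -leqNgt leqn0 => /eqP h.
  have := Hsum t i (ltnW hi); have := HcRstep t i hi; lia.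
have HB : forall t j, 1 < tot t -> j.+1 < size Ps -> ~~ remb t j.+1 -> doneb t j.
  move=> t j ht hj; rewrite HremE HdoneE -leqNgt leqn0 => /eqP h.
  have := Hsum t j (ltnW hj); have := HcRstep t j hj; lia.
have Hdone_mono : forall t i l, i <= l -> l < size Ps -> doneb t i -> doneb t l.
  move=> t i l il hl /hasP [m mi hm]; apply/hasP; exists m => //.
  have [_ hci] := Hinv i (leq_ltn_trans il hl).
  have [c hc] := hci m; have [k hk] := Hmono i l il hl m.
  move: hm; rewrite hk hc drop_drop !seq_minus_drop.
  rewrite (_ : take c _ = take c (take (k + c) (nth [::] Q m))); last first.
    by rewrite -take_min (minn_idPl (leq_addl k c)).
  by move/hasP => [x /mem_take xi ax]; apply/hasP; exists x.
have Hrem_mono : forall t i l, i <= l -> l < size Ps -> remb t l -> remb t i.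
  move=> t i l il hl /hasP [m mi hm]; apply/hasP; exists m => //.
  have [k hk] := Hmono i l il hl m.
  by move: hm; rewrite hk => /hasP [x /mem_drop xi ax]; apply/hasP; exists x.
have Hdone0 : forall t, doneb t 0 = false.
  move=> t; apply/negbTE/hasP => [[m _]]; rewrite /P H0 /seq_minus subnn take0.
  by [].
have Hremlast : forall t, remb t (size Ps).-1 = false.
  move=> t; apply/negbTE/hasP => [[m _]]; rewrite /P Hlast nth_nseq; by case: ifP.
have Htot : forall t, t \in plts plt Q -> 1 < tot t.
  move=> t; rewrite /plts mem_undup => /mapP [b bQ ->]; exact: Hcnt.
have HC : forall t i, i < size Ps -> 0 < tot t -> ~~ remb t i -> doneb t i.
  move=> t i hi ht; rewrite HremE HdoneE -leqNgt leqn0 => /eqP h.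
  have := Hsum t i hi; lia.
have Hlt : (size Ps).-1 < size Ps by rewrite prednK.
have HX : forall i, i < size Ps ->
    nth [::] [seq open_plts plt Q Qi | Qi <- Ps] i = open_plts plt Q (P i).
  by move=> i hi; rewrite (nth_map [::]).
have Hat : forall t i, i < size Ps -> t \in plts plt Q -> remb t i -> doneb t i ->
    t \in nth [::] [seq open_plts plt Q Qi | Qi <- Ps] i.
  by move=> t i hi ht hr hd; rewrite HX // mem_filter Hopen hr hd ht.
have HXin : forall t i, i < size Ps -> t \in nth [::] [seq open_plts plt Q Qi | Qi <- Ps] i ->
    [/\ t \in plts plt Q, remb t i & doneb t i].
  by move=> t i hi; rewrite HX // mem_filter Hopen => /andP [/andP [-> ->] ->].
split; [split|].
- move=> v; split.
  + move=> hv; have ht := Htot v hv.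
    have dl : doneb v (size Ps).-1 by apply: HC => //; [lia | rewrite Hremlast].
    have [i il /andP [di di1]] := @trans_first (doneb v) (size Ps).-1 (negbT (Hdone0 v)) dl.
    exists (nth [::] [seq open_plts plt Q Qi | Qi <- Ps] i.+1).
      by apply: mem_nth; rewrite size_map; lia.
    apply: Hat => //; first lia.
    apply: HA => //; lia.
  + by move=> [X /mapP [Qi QiPs ->]]; rewrite mem_filter => /andP [_ ->].
- move=> u v [uv [q qQ [b1 [b2 [s1 [s2 [s3 [eq [e1 e2]]]]]]]]].
  pose m := index q Q.
  have hm : m < size Q by rewrite index_mem.
  have hqm : nth [::] Q m = q by rewrite nth_index.
  have b1Q : b1 \in flatten Q.
    by apply/flattenP; exists q => //; rewrite eq mem_cat in_cons eqxx orbT.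
  have b2Q : b2 \in flatten Q.
    by apply/flattenP; exists q => //; rewrite eq mem_cat in_cons mem_cat in_cons eqxx !orbT.
  have uP : u \in plts plt Q by rewrite /plts mem_undup -e1; apply: map_f.
  have vP : v \in plts plt Q by rewrite /plts mem_undup -e2; apply: map_f.
  have r0 : remb v 0.
    apply/hasP; exists m; first by rewrite mem_iota.
    rewrite /P H0 hqm; apply/hasP; exists b2; last by rewrite e2.
    by rewrite eq mem_cat in_cons mem_cat in_cons eqxx !orbT.
  have r0' : ~~ ~~ remb v 0 by rewrite negbK.
  have [j jl /andP [rj rj1]] := @trans_first (fun i => ~~ remb v i) (size Ps).-1
     (r0' : ~~ ~~ remb v 0) (negbT (Hremlast v)).
  rewrite negbK in rj.
  have jS : j.+1 < size Ps by lia.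
  have dvj : doneb v j by apply: HB => //; exact: Htot.
  have duj : doneb u j.
    have [_ hc] := Hinv j (ltnW jS); have [c hcm] := hc m.
    have nb2 : b2 \notin drop (1 + c) q.
      apply/negP => hb2; move/negP: rj1; apply; apply/hasP; exists m.
        by rewrite mem_iota.
      apply/hasP; exists b2; last by rewrite e2.
      case: (Hst2 j m jS) => ->; rewrite hcm ?hqm ?drop_drop //.
      by move: hb2; rewrite -drop_drop => /mem_drop.
    have hc1 : size s1 < c.
      rewrite ltnNge; apply/negP => hc1; move/negP: nb2; apply.
      rewrite eq; apply: mem_drop_pos; lia.
    apply/hasP; exists m; first by rewrite mem_iota.
    rewrite hcm hqm seq_minus_drop; apply/hasP; exists b1; last by rewrite e1.
    by rewrite eq; apply: mem_take_pos.
  have [i ij /andP [di di1]] := @trans_first (doneb u) j (negbT (Hdone0 u)) duj.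
  exists i.+1, j; split.
  + exact: ij.
  + by rewrite size_map; exact: ltnW jS.
  + apply: Hat; [exact: (leq_ltn_trans ij (ltnW jS)) | exact: uP | | exact: di1].
    apply: HA; [exact: Htot | exact: (leq_ltn_trans ij (ltnW jS)) | exact: di].
  + apply: Hat; [exact: ltnW jS | exact: vP | exact: rj | exact: dvj].
- move=> u i j l il lj; rewrite size_map => js hi hj.
  have [uP _ di] := HXin u i (leq_ltn_trans (leq_trans il lj) js) hi.
  have [_ rj _] := HXin u j js hj.
  apply: Hat; [exact: leq_ltn_trans lj js | exact: uP | | ].
    exact: Hrem_mono lj js rj.
  exact: (Hdone_mono u i l il (leq_ltn_trans lj js) di).
have hmax : \max_(X <- [seq open_plts plt Q Qi | Qi <- Ps]) size (undup X) <= p.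
  apply/bigmax_leqP_seq => X /mapP [Qi hQi ->] _.
  apply: leq_trans (size_undup _) _.
  rewrite -(nth_index [::] hQi); apply: Hp; by rewrite index_mem.
rewrite /pd_width; move: hmax; set M := \max_(_ <- _) _ => hmax.
by rewrite lerD2r lez_nat.
Qed.
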